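(* Let $g:\mathbb{R}^n\to\mathbb{R}\cup\{+\infty\}$ be a proper closed convex function and let $f=f_1-f_2$, where $f_1,f_2:\mathbb{R}^n\to\mathbb{R}$ are convex differentiable functions such that $\nabla f_1$ is Lipschitz continuous with modulus $L>0$, $\nabla f_2$ is Lipschitz continuous with modulus $l\ge 0$, and $L\ge l$. Let $F=f+g$, and assume $\inf F>-\infty$ and that this infimum is attained. Let $\{x^k\}$ be generated by Algorithm 1 (described in the context) and suppose $\bar\beta:=\sup_k\beta_k<\sqrt{L/(L+l)}$. Then: (i) $\sum_{k=0}^\infty\|x^{k+1}-x^k\|^2<\infty$; (ii) any accumulation point of $\{x^k\}$ is a stationary point of $F$, i.e., a point $\bar x$ with $0\in\nabla f(\bar x)+\partial g(\bar x)$.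
   Context: $\partial g$ denotes the convex subdifferential. For a proper closed convex $h$, $\mathrm{Prox}_h(v)=\arg\min_{x\in\mathbb{R}^n}\{h(x)+\tfrac12\|x-v\|^2\}$. Algorithm 1 (proximal gradient algorithm with extrapolation): choose $x^0\in\operatorname{dom} g$ and $\{\beta_k\}\subseteq[0,\sqrt{L/(L+l)}]$, set $x^{-1}=x^0$, and for $k=0,1,2,\dots$ set $y^k=x^k+\beta_k(x^k-x^{k-1})$ and $x^{k+1}=\mathrm{Prox}_{\frac1L g}\big(y^k-\tfrac1L\nabla f(y^k)\big)$. *)

(* Defs.v *)
From HB Require Import structures.
From mathcomp Require Import all_boot all_order all_algebra.
From mathcomp Require Import all_classical all_reals all_analysis.
Set Implicit Arguments. Unset Strict Implicit. Unset Printing Implicit Defensive.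
Import Order.TTheory GRing.Theory Num.Theory.
Import numFieldNormedType.Exports.
Local Open Scope classical_set_scope.
Local Open Scope ring_scope.

Section Defs.
Variables (R : realType) (n : nat).
Notation vec := 'rV[R]_n.

Definition dotv (u v : vec) : R := \sum_(i < n) u 0 i * v 0 i.
Definition enorm (u : vec) : R := Num.sqrt (dotv u u).

Definition convex_fun (f : vec -> R) : Prop :=
  forall (x y : vec) (t : R), 0 <= t <= 1 ->
    f (t *: x + (1 - t) *: y) <= t * f x + (1 - t) * f y.

Definition is_gradient (f : vec -> R) (G : vec -> vec) : Prop :=
  forall x : vec, differentiable f x /\ forall h : vec, 'd f x h = dotv (G x) h.

Definition lipschitz_with (G : vec -> vec) (L : R) : Prop :=
  forall x y : vec, enorm (G x - G y) <= L * enorm (x - y).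

Definition edom (g : vec -> \bar R) : set vec := [set x | (g x < +oo)%E].

Definition proper_fun (g : vec -> \bar R) : Prop :=
  (exists x, (g x < +oo)%E) /\ (forall x, (-oo < g x)%E).

Definition closed_fun (g : vec -> \bar R) : Prop :=
  closed [set p : vec * R | (g p.1 <= p.2%:E)%E].

(* convex = epigraph is convex *)
Definition convex_efun (g : vec -> \bar R) : Prop :=
  forall (x y : vec) (a b t : R), (g x <= a%:E)%E -> (g y <= b%:E)%E ->
    0 <= t <= 1 ->
    (g (t *: x + (1 - t) *: y)%R <= (t * a + (1 - t) * b)%:E)%E.

Definition subdiff (g : vec -> \bar R) (x v : vec) : Prop :=
  g x \is a fin_num /\
  forall z : vec, (g x + (dotv v (z - x)%R)%:E <= g z)%E.

Definition is_prox (c : R) (g : vec -> \bar R) (v p : vec) : Prop :=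
  forall z : vec,
    (c%:E * g p + (enorm (p - v)%R ^+ 2 / 2)%:E <=
     c%:E * g z + (enorm (z - v)%R ^+ 2 / 2)%:E)%E.

Definition accum_point (x : nat -> vec) (xb : vec) : Prop :=
  forall eps : R, 0 < eps -> forall N : nat, exists k : nat,
    (N <= k)%N /\ enorm (x k - xb) < eps.

End Defs.

(* Main.v *)
Require Import Defs.
From HB Require Import structures.
From mathcomp Require Import all_boot all_order all_algebra.
From mathcomp Require Import all_classical all_reals all_analysis.
From mathcomp Require Import ring lra.
Import Order.TTheory GRing.Theory Num.Theory.
Import numFieldNormedType.Exports.
Local Open Scope classical_set_scope.
Local Open Scope ring_scope.
Set Implicit Arguments. Unset Strict Implicit. Unset Printing Implicit Defensive.

Section Dot.
Variables (R : realType) (n : nat).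
Notation vec := 'rV[R]_n.
Implicit Types u v w : vec.

Lemma dotvC u v : dotv u v = dotv v u.
Proof. by rewrite /dotv; apply: eq_bigr => i _; rewrite mulrC. Qed.
Lemma dotvDl u v w : dotv (u + v) w = dotv u w + dotv v w.
Proof. by rewrite /dotv -big_split; apply: eq_bigr => i _; rewrite !mxE mulrDl. Qed.
Lemma dotvDr u v w : dotv w (u + v) = dotv w u + dotv w v.
Proof. by rewrite dotvC dotvDl !(dotvC w). Qed.
Lemma dotvZl a u v : dotv (a *: u) v = a * dotv u v.
Proof. by rewrite /dotv mulr_sumr; apply: eq_bigr => i _; rewrite !mxE mulrA. Qed.
Lemma dotvZr a u v : dotv u (a *: v) = a * dotv u v.
Proof. by rewrite dotvC dotvZl dotvC. Qed.
Lemma dotvNl u v : dotv (- u) v = - dotv u v.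
Proof. by rewrite -scaleN1r dotvZl mulN1r. Qed.
Lemma dotvNr u v : dotv u (- v) = - dotv u v.
Proof. by rewrite dotvC dotvNl dotvC. Qed.
Lemma dotvBl u v w : dotv (u - v) w = dotv u w - dotv v w.
Proof. by rewrite dotvDl dotvNl. Qed.
Lemma dotvBr u v w : dotv w (u - v) = dotv w u - dotv w v.
Proof. by rewrite dotvDr dotvNr. Qed.
Lemma dotv0l v : dotv 0 v = 0.
Proof. by rewrite /dotv big1 // => i _; rewrite mxE mul0r. Qed.
Lemma dotv0r v : dotv v 0 = 0.
Proof. by rewrite dotvC dotv0l. Qed.
Lemma dotvv_ge0 u : 0 <= dotv u u.
Proof. by rewrite /dotv sumr_ge0 // => i _; rewrite -expr2 sqr_ge0. Qed.
Lemma enorm_ge0 u : 0 <= enorm u.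
Proof. exact: sqrtr_ge0. Qed.
Lemma enorm_sq u : enorm u ^+ 2 = dotv u u.
Proof. by rewrite /enorm sqr_sqrtr // dotvv_ge0. Qed.
Lemma coord_le u j : `|u 0 j| <= enorm u.
Proof.
rewrite -(@ler_pXn2r _ 2) ?nnegrE ?enorm_ge0 // enorm_sq /dotv.
rewrite (bigD1 j) //= real_normK ?num_real // -expr2 lerDl sumr_ge0 // => i _.
by rewrite -expr2 sqr_ge0.
Qed.
Lemma line_derive (f : vec -> R) G (y h : vec) (t : R) : is_gradient f G ->
  is_derive t 1 (fun s => f (y + s *: h)) (dotv (G (y + t *: h)) h).
Proof.
move=> gf.
have di : is_diff t (fun s : R => y + s *: h) (fun u : R => u *: h).
  have -> : (fun u : R => u *: h) = (fun u : R => (0 : vec) + u *: h).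
    by apply/funext => u; rewrite add0r.
  apply: is_diffD.
have [df1 df2] := gf (y + t *: h).
have dc : differentiable (f \o (fun s : R => y + s *: h)) t.
  apply: differentiable_comp => //.
have dd : differentiable (fun s : R => y + s *: h) t by exact: ex_diff.
have := diff_comp dd df1.
rewrite diff_val => E.
apply: (@is_derive_eq _ _ _ _ _ _ _ ('D_1 (f \o (fun s : R => y + s *: h)) t)).
  apply: derivableP; exact: diff_derivable.
by rewrite deriveE // E /= scale1r df2.
Qed.

Ltac dexp := rewrite ?(dotvDl, dotvDr, dotvBl, dotvBr, dotvZl, dotvZr, dotvNl, dotvNr).

Lemma le_eps (x c d : R) : 0 <= d ->
  (forall e, 0 < e -> e <= 1 -> x <= c + e * d) -> x <= c.
Proof.
move=> d0 H; case: (leP x c) => // xc.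
have xc0 : 0 < x - c by rewrite subr_gt0.
pose e := (x - c) / (x - c + d + 1).
have den : 0 < x - c + d + 1 by lra.
have e0 : 0 < e by rewrite divr_gt0.
have e1 : e <= 1 by rewrite ler_pdivrMr // mul1r; lra.
have := H e e0 e1.
have : e * d < x - c.
  rewrite /e mulrAC ltr_pdivrMr //.
  have : (x - c) * d < (x - c) * (x - c + d + 1) by rewrite ltr_pM2l //; lra.
  done.
lra.
Qed.

Lemma dot_sq_expand (p q : R) u v :
  dotv (q *: u - p *: v) (q *: u - p *: v) =
  q ^+ 2 * dotv u u - 2 * p * q * dotv u v + p ^+ 2 * dotv v v.
Proof. dexp; rewrite (dotvC v u); ring. Qed.

Lemma CS u v : dotv u v <= enorm u * enorm v.
Proof.
set a := enorm u; set b := enorm v.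
have a0 : 0 <= a := enorm_ge0 u.
have b0 : 0 <= b := enorm_ge0 v.
apply: (@le_eps _ _ (a + b + 1)); first lra.
move=> e e0 e1.
set A := a + e; set B := b + e.
have A0 : 0 < A by rewrite /A; lra.
have B0 : 0 < B by rewrite /B; lra.
have := dotvv_ge0 (B *: u - A *: v).
rewrite dot_sq_expand -!enorm_sq -/a -/b => H.
have H2 : 2 * A * B * dotv u v <= 2 * (A * B) * (A * B).
  have : a ^+ 2 <= A ^+ 2 by rewrite lerXn2r ?nnegrE ?(ltW A0) // /A; lra.
  have : b ^+ 2 <= B ^+ 2 by rewrite lerXn2r ?nnegrE ?(ltW B0) // /B; lra.
  move=> hb ha.
  have : B ^+ 2 * a ^+ 2 <= B ^+ 2 * A ^+ 2 by rewrite ler_wpM2l // sqr_ge0.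
  have : A ^+ 2 * b ^+ 2 <= A ^+ 2 * B ^+ 2 by rewrite ler_wpM2l // sqr_ge0.
  have -> : 2 * (A * B) * (A * B) = B ^+ 2 * A ^+ 2 + A ^+ 2 * B ^+ 2 by ring.
  lra.
have AB : 0 < A * B by rewrite mulr_gt0.
have : dotv u v <= A * B.
  rewrite -(@ler_pM2l _ (2 * (A * B))); last by rewrite mulr_gt0.
  rewrite !mulrA in H2 *; lra.
rewrite /A /B; nra.
Qed.

Lemma enormN u : enorm (- u) = enorm u.
Proof. by rewrite /enorm dotvNl dotvNr opprK. Qed.

Lemma CS_abs u v : `|dotv u v| <= enorm u * enorm v.
Proof.
rewrite ler_norml CS andbT.
have := CS u (- v); rewrite dotvNr enormN; lra.
Qed.

Lemma enormZ (c : R) u : enorm (c *: u) = `|c| * enorm u.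
Proof. by rewrite /enorm dotvZl dotvZr mulrA sqrtrM ?sqr_ge0 // -expr2 sqrtr_sqr. Qed.

Lemma enormD u v : enorm (u + v) <= enorm u + enorm v.
Proof.
rewrite -(@ler_pXn2r _ 2) ?nnegrE ?addr_ge0 ?enorm_ge0 //.
rewrite enorm_sq sqrrD !enorm_sq; dexp; rewrite (dotvC v u).
have := CS u v; lra.
Qed.

End Dot.


Section Desc.
Variables (R : realType) (n : nat).
Notation vec := 'rV[R]_n.
Implicit Types u v w y z : vec.

Lemma lip_dot (G : vec -> vec) (L : R) y h (c : R) : lipschitz_with G L -> 0 <= c ->
  `|dotv (G (y + c *: h) - G y) h| <= L * c * dotv h h.
Proof.
move=> GL c0.
apply: le_trans (CS_abs (G (y + c *: h) - G y) h) _.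
have := GL (y + c *: h) y; rewrite [y + _ - y]addrAC subrr add0r enormZ ger0_norm // => H.
rewrite -enorm_sq expr2 mulrA.
by apply: ler_wpM2r; [exact: enorm_ge0| rewrite mulrA in H].
Qed.

Lemma descent (f : vec -> R) G (L : R) y z : is_gradient f G -> lipschitz_with G L ->
  f z <= f y + dotv (G y) (z - y) + L / 2 * dotv (z - y) (z - y).
Proof.
move=> gf GL.
set h := z - y.
pose phi := fun s : R => f (y + s *: h) - s * dotv (G y) h - L / 2 * (s ^+ 2 * dotv h h).
pose dphi := fun s : R => dotv (G (y + s *: h)) h - dotv (G y) h - L / 2 * ((2 * s) * dotv h h).
have der : forall s : R, is_derive s (1:R) phi (dphi s).
  move=> s; rewrite /phi /dphi.
  apply: is_derive_eq.
    apply: is_deriveB; first apply: is_deriveB.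
    exact: line_derive.
  rewrite /= !scaler0 !add0r /GRing.scale /= !mulr1.
  by ring.
have cont : {within `[0, 1], continuous phi}.
  apply: derivable_within_continuous => s _; by case: (der s).
have [c c01 E] := MVT (@ltr01 R) (fun s _ => der s) cont.
move: E; rewrite /phi /dphi subr0 mulr1 scale1r scale0r addr0 mul0r subr0 expr0n /= mul0r mulr0 subr0.
rewrite expr1n mul1r mul1r /h [y + (z - y)]addrC subrK => E.
have c0 : 0 <= c by move: c01; rewrite in_itv /= => /andP[/ltW].
have := lip_dot y h GL c0; rewrite dotvBl ler_norml => /andP[_].
have : c <= 1 by move: c01; rewrite in_itv /= => /andP[_ /ltW].
move=> c1 Hl.
have hh := dotvv_ge0 h.
rewrite -/h.
nra.
Qed.

Lemma convex_grad (f : vec -> R) G (L : R) y z : convex_fun f -> is_gradient f G ->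
  lipschitz_with G L -> 0 <= L ->
  f y + dotv (G y) (z - y) <= f z.
Proof.
move=> cf gf GL L0.
set h := z - y.
suff : dotv (G y) h <= f z - f y by lra.
apply: (@le_eps _ _ _ (L * dotv h h)); first by rewrite mulr_ge0 // dotvv_ge0.
move=> t t0 t1.
pose psi := fun s : R => f (y + s *: h).
have der : forall s : R, is_derive s (1:R) psi (dotv (G (y + s *: h)) h).
  by move=> s; exact: line_derive.
have cont : {within `[0, t], continuous psi}.
  apply: derivable_within_continuous => s _; by case: (der s).
have [c c0t E] := MVT t0 (fun s _ => der s) cont.
move: E; rewrite /psi subr0 scale0r addr0 => E.
have cv := cf z y t; rewrite (ltW t0) t1 /= in cv.
have ez : y + t *: h = t *: z + (1 - t) *: y.
  by apply/rowP => i; rewrite /h !mxE; ring.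
rewrite -ez in cv; specialize (cv isT).
have c0 : 0 <= c by move: c0t; rewrite in_itv /= => /andP[/ltW].
have ct : c <= t by move: c0t; rewrite in_itv /= => /andP[_ /ltW].
have := lip_dot y h GL c0; rewrite dotvBl ler_norml => /andP[Hl _].
have hh := dotvv_ge0 h.
have Dc : dotv (G (y + c *: h)) h <= f z - f y.
  rewrite -(@ler_pM2r _ t) //; lra.
have : L * c * dotv h h <= t * (L * dotv h h).
  have := mulr_ge0 L0 hh; nra.
lra.
Qed.
End Desc.


Ltac dexp := rewrite ?(dotvDl, dotvDr, dotvBl, dotvBr, dotvZl, dotvZr, dotvNl, dotvNr).

Section Prox.
Variables (R : realType) (n : nat).
Notation vec := 'rV[R]_n.
Implicit Types u v w y z p : vec.

Lemma prox_fin (c : R) (g : vec -> \bar R) w p z : 0 < c ->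
  (forall x, (-oo < g x)%E) -> (g z < +oo)%E -> is_prox c g w p -> g p \is a fin_num.
Proof.
move=> c0 gm gz px.
have := px z.
have gzf : g z \is a fin_num by rewrite fin_numE -ltNye gm -ltey gz.
have gp := gm p.
case E: (g p) => [r| |] //; last by rewrite E in gp.
rewrite -(fineK gzf) mulry gtr0_sg // mul1e addye // -EFinM -EFinD.
Qed.

Lemma conv_sq (t : R) (a b : vec) : dotv (t *: a + (1 - t) *: b) (t *: a + (1 - t) *: b) =
   t * dotv a a + (1 - t) * dotv b b - t * (1 - t) * dotv (a - b) (a - b).
Proof. dexp; rewrite (dotvC b a); ring. Qed.

Lemma prox_strong (c : R) (g : vec -> \bar R) w p z : 0 < c ->
  (forall x, (-oo < g x)%E) -> convex_efun g -> is_prox c g w p ->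
  g p \is a fin_num -> g z \is a fin_num ->
  c * fine (g p) + dotv (p - w) (p - w) / 2 <=
  c * fine (g z) + dotv (z - w) (z - w) / 2 - dotv (z - p) (z - p) / 2.
Proof.
move=> c0 gm cg px gpf gzf.
set gp := fine (g p); set gz := fine (g z).
have Egp : g p = gp%:E by rewrite fineK.
have Egz : g z = gz%:E by rewrite fineK.
set a := z - w; set b := p - w.
have zp : z - p = a - b by rewrite /a /b; apply/rowP => i; rewrite !mxE; ring.
rewrite zp.
set D := dotv (a - b) (a - b).
have D0 : 0 <= D := dotvv_ge0 _.
apply: (@le_eps _ _ _ (D / 2)); first by rewrite divr_ge0.
move=> t t0 t1.
set zt := t *: z + (1 - t) *: p.
have cv : (g zt <= (t * gz + (1 - t) * gp)%:E)%E.
  apply: cg; [by rewrite Egz | by rewrite Egp | by rewrite (ltW t0) t1].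
have gztf : g zt \is a fin_num.
  rewrite fin_numE -ltNye gm /=; apply: contraTneq cv => ->.
  by rewrite leye_eq.
set gzt := fine (g zt).
have Egzt : g zt = gzt%:E by rewrite fineK.
have H1 := px zt.
rewrite Egp Egzt -!EFinM -!EFinD lee_fin !enorm_sq in H1.
rewrite Egzt lee_fin in cv.
have H2 : c * gzt <= c * (t * gz + (1 - t) * gp) by rewrite ler_wpM2l // ltW.
have ezt : zt - w = t *: a + (1 - t) *: b.
  by rewrite /zt /a /b; apply/rowP => i; rewrite !mxE; ring.
rewrite ezt in H1.
have H3 : dotv (t *: a + (1 - t) *: b) (t *: a + (1 - t) *: b) =
   t * dotv a a + (1 - t) * dotv b b - t * (1 - t) * D.
  exact: conv_sq.
rewrite H3 in H1.
rewrite -(@ler_pM2l _ t) //.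
rewrite -subr_ge0.
have -> : t * (c * gz + dotv a a / 2 - D / 2 + t * (D / 2)) - t * (c * gp + dotv b b / 2)
  = (c * (t * gz + (1 - t) * gp) + (t * dotv a a + (1 - t) * dotv b b - t * (1 - t) * D) / 2)
    - (c * gp + dotv b b / 2) by ring.
rewrite subr_ge0; lra.
Qed.

Lemma stat_from_quad (g : vec -> \bar R) xb (V : vec) (L : R) : 0 <= L ->
  (forall x, (-oo < g x)%E) -> convex_efun g -> g xb \is a fin_num ->
  (forall z, g z \is a fin_num ->
     fine (g xb) <= fine (g z) + dotv V (z - xb) + L / 2 * dotv (z - xb) (z - xb)) ->
  subdiff g xb (- V).
Proof.
move=> L0 gm cg gbf H; split => // z.
case E: (g z) => [gz| |]; last by have := gm z; rewrite E.
  2: by rewrite leey.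
have gzf : g z \is a fin_num by rewrite E.
set gb := fine (g xb).
have Egb : g xb = gb%:E by rewrite fineK.
rewrite Egb -EFinD lee_fin dotvNl.
suff : gb <= gz + dotv V (z - xb) by lra.
set D := dotv (z - xb) (z - xb).
have D0 : 0 <= D := dotvv_ge0 _.
apply: (@le_eps _ _ _ (L / 2 * D)); first by rewrite mulr_ge0 // divr_ge0.
move=> t t0 t1.
set zt := t *: z + (1 - t) *: xb.
have cv : (g zt <= (t * gz + (1 - t) * gb)%:E)%E.
  apply: cg; [by rewrite E | by rewrite Egb | by rewrite (ltW t0) t1].
have gztf : g zt \is a fin_num.
  rewrite fin_numE -ltNye gm /=; apply: contraTneq cv => ->.
  by rewrite leye_eq.
have Egzt : g zt = (fine (g zt))%:E by rewrite fineK.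
rewrite Egzt lee_fin in cv.
have := H zt gztf.
have -> : zt - xb = t *: (z - xb).
  by rewrite /zt; apply/rowP => i; rewrite !mxE; ring.
rewrite !dotvZr !dotvZl -/D -/gb => H1.
rewrite -(@ler_pM2l _ t) // -subr_ge0.
have -> : t * (gz + dotv V (z - xb) + t * (L / 2 * D)) - t * gb =
  (t * gz + (1 - t) * gb + t * dotv V (z - xb) + L / 2 * (t * (t * D))) - gb by ring.
rewrite subr_ge0; lra.
Qed.

Lemma prox_expand (L A : R) q y (V : vec) : 0 < L ->
  L * (L^-1 * A + dotv (q - (y - L^-1 *: V)) (q - (y - L^-1 *: V)) / 2) =
  A + dotv V (q - y) + L / 2 * dotv (q - y) (q - y) + L^-1 / 2 * dotv V V.
Proof.
move=> L0.
have -> : q - (y - L^-1 *: V) = (q - y) + L^-1 *: V.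
  by apply/rowP => i; rewrite !mxE; ring.
move: (q - y) => a.
dexp; rewrite (dotvC a V); field.
by rewrite gt_eqF.
Qed.

Lemma prox_step (g : vec -> \bar R) (L : R) y (V : vec) p z : 0 < L ->
  (forall x, (-oo < g x)%E) -> convex_efun g ->
  is_prox L^-1 g (y - L^-1 *: V) p -> g p \is a fin_num -> g z \is a fin_num ->
  fine (g p) + dotv V (p - y) + L / 2 * dotv (p - y) (p - y) <=
  fine (g z) + dotv V (z - y) + L / 2 * dotv (z - y) (z - y) - L / 2 * dotv (z - p) (z - p).
Proof.
move=> L0 gm cg px gpf gzf.
have Li0 : 0 < L^-1 by rewrite invr_gt0.
have H := prox_strong Li0 gm cg px gpf gzf.
have := ler_wpM2l (ltW L0) H.
rewrite mulrBr !prox_expand //.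
lra.
Qed.
End Prox.


Unset Implicit Arguments.

Lemma enorm_lt (R : realType) n (u : 'rV[R]_n) (c : R) : 0 <= c -> dotv u u < c ^+ 2 -> enorm u < c.
Proof. by move=> c0 h; rewrite -(@ltr_pXn2r _ 2%N) // ?inE ?nnegrE ?enorm_ge0 // enorm_sq. Qed.

Lemma dot_sub_sq (R : realType) n (u v : 'rV[R]_n) :
  dotv (u - v) (u - v) = dotv u u - 2 * dotv u v + dotv v v.
Proof. rewrite !(dotvBl, dotvBr) (dotvC v u); ring. Qed.

Theorem lemma3p4 (R : realType) (n : nat)
  (g : 'rV[R]_n -> \bar R) (f1 f2 : 'rV[R]_n -> R)
  (G1 G2 : 'rV[R]_n -> 'rV[R]_n) (L l : R)
  (beta : nat -> R) (x : nat -> 'rV[R]_n) :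
  proper_fun g -> closed_fun g -> convex_efun g ->
  convex_fun f1 -> convex_fun f2 ->
  is_gradient f1 G1 -> is_gradient f2 G2 ->
  0 < L -> 0 <= l -> l <= L ->
  lipschitz_with G1 L -> lipschitz_with G2 l ->
  let F := fun z => ((f1 z - f2 z)%:E + g z)%E in
  (-oo < ereal_inf (range F))%E ->
  (exists xs, forall z, (F xs <= F z)%E) ->
  x 0%N \in edom g ->
  (forall k, 0 <= beta k <= Num.sqrt (L / (L + l))) ->
  sup (range beta) < Num.sqrt (L / (L + l)) ->
  (forall k : nat,
     let y := x k + beta k *: (x k - x k.-1) in
     is_prox L^-1 g (y - L^-1 *: (G1 y - G2 y)) (x k.+1)) ->
  ((\sum_(0 <= k <oo) ((enorm (x k.+1 - x k)) ^+ 2)%:E < +oo)%E /\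
   (forall xb, accum_point x xb ->
      exists v, subdiff g xb v /\ G1 xb - G2 xb + v = 0)).
Proof.
move=> [_ gm] gc gcv f1c f2c g1 g2 L0 l0 lL G1L G2L F _ [xs xsmin] x0d bk bsup px.
set Gf := fun z => G1 z - G2 z.
set yk := fun k => x k + beta k *: (x k - x k.-1).
have pxk : forall k, is_prox L^-1 g (yk k - L^-1 *: Gf (yk k)) (x k.+1) by move=> k; exact: px.
have gfin : forall k, g (x k) \is a fin_num.
  have g0 : g (x 0%N) \is a fin_num.
    by move: x0d; rewrite /edom inE /= => h; rewrite fin_numE -ltNye gm -ltey h.
  elim=> [//|k IH].
  apply: (prox_fin (z := x 0%N)) (pxk k); first by rewrite invr_gt0.
    exact: gm.
  by move: x0d; rewrite /edom inE.
set Fr := fun k => f1 (x k) - f2 (x k) + fine (g (x k)).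
set Dk := fun k => dotv (x k - x k.-1) (x k - x k.-1).
have key : forall k, Fr k.+1 + L / 2 * Dk k.+1 <= Fr k + (L + l) / 2 * (beta k ^+ 2 * Dk k).
  move=> k.
  have S := prox_step L0 gm gcv (pxk k) (gfin k.+1) (gfin k).
  have desc1 := descent (yk k) (x k.+1) g1 G1L.
  have cvx2 := convex_grad (yk k) (x k.+1) f2c g2 G2L l0.
  have cvx1 := convex_grad (yk k) (x k) f1c g1 G1L (ltW L0).
  have desc2 := descent (yk k) (x k) g2 G2L.
  rewrite /Gf !(dotvBl (G1 (yk k))) in S.
  have Exy : dotv (x k - yk k) (x k - yk k) = beta k ^+ 2 * Dk k.
    have -> : x k - yk k = - (beta k *: (x k - x k.-1)).
      by rewrite /yk; apply/rowP => i; rewrite !mxE; ring.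
    by rewrite dotvNl dotvNr opprK dotvZl dotvZr mulrA -expr2.
  have Exp : dotv (x k - x k.+1) (x k - x k.+1) = Dk k.+1.
    rewrite /Dk /=.
    have -> : x k - x k.+1 = - (x k.+1 - x k) by rewrite opprB.
    by rewrite dotvNl dotvNr opprK.
  rewrite Exy Exp in S; rewrite Exy in desc2.
  rewrite /Fr /=; lra.
have gxsf : g xs \is a fin_num.
  rewrite fin_numE -ltNye gm /=; apply: contraTneq (xsmin (x 0%N)) => E.
  by rewrite /F E addey // -(fineK (gfin 0%N)) -EFinD leye_eq.
set m := f1 xs - f2 xs + fine (g xs).
have mle : forall k, m <= Fr k.
  move=> k; have := xsmin (x k).
  by rewrite /F -(fineK gxsf) -(fineK (gfin k)) -!EFinD lee_fin.
set bb := sup (range beta).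
have hub : has_ubound (range beta).
  by exists (Num.sqrt (L / (L + l))) => _ [k _ <-]; case/andP: (bk k).
have bkb : forall k, beta k <= bb by move=> k; apply: ub_le_sup => //; exists k.
have bb0 : 0 <= bb by apply: le_trans (bkb 0%N); case/andP: (bk 0%N).
have Ll0 : 0 < L + l by lra.
have bb2 : (L + l) * bb ^+ 2 < L.
  have s2 : Num.sqrt (L / (L + l)) ^+ 2 = L / (L + l).
    by rewrite sqr_sqrtr // divr_ge0 // ltW.
  have : bb ^+ 2 < L / (L + l).
    rewrite -s2 ltrXn2r // ?nnegrE ?sqrtr_ge0 //.
  by rewrite ltr_pdivlMr // mulrC.
set del := (L - (L + l) * bb ^+ 2) / 2.
have del0 : 0 < del by rewrite /del divr_gt0 //; lra.
have Dk0 : forall k, 0 <= Dk k by move=> k; exact: dotvv_ge0.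
have step : forall k, Fr k.+1 + L / 2 * Dk k.+1 <= Fr k + L / 2 * Dk k - del * Dk k.
  move=> k; have := key k.
  have b2 : beta k ^+ 2 <= bb ^+ 2.
    by rewrite lerXn2r ?nnegrE ?bkb //; case/andP: (bk k).
  have := ler_wpM2r (Dk0 k) b2 => h1.
  have h2 : (L + l) / 2 * (beta k ^+ 2 * Dk k) <= (L + l) / 2 * (bb ^+ 2 * Dk k).
    by rewrite ler_wpM2l // divr_ge0 // ltW.
  rewrite /del; lra.
have DD0 : Dk 0%N = 0 by rewrite /Dk /= subrr dotv0l.
set M := (Fr 0%N - m) / del.
have sumb : forall N, \sum_(0 <= k < N) Dk k <= M.
  have sb : forall N, del * \sum_(0 <= k < N) Dk k <= Fr 0%N + L / 2 * Dk 0%N - (Fr N + L / 2 * Dk N).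
    elim=> [|N IH]; first by rewrite big_geq // mulr0 subrr.
    rewrite big_nat_recr //= mulrDr; have := step N; lra.
  move=> N; rewrite /M ler_pdivlMr // mulrC.
  have := sb N; have := mle N; have := Dk0 N; rewrite DD0; nra.
have ED : forall k, enorm (x k.+1 - x k) ^+ 2 = Dk k.+1 by move=> k; rewrite enorm_sq.
split.
  apply: (@le_lt_trans _ _ M%:E); last by rewrite ltry.
  apply: lime_le; first by apply: is_cvg_nneseries => k _ _; rewrite lee_fin sqr_ge0.
  apply: nearW => N; rewrite sumEFin lee_fin.
  under eq_bigr do rewrite ED.
  apply: le_trans (sumb N.+1); rewrite big_nat_recl // DD0 add0r.
  done.
have Dlim : forall e, 0 < e -> exists N, forall k, (N <= k)%N -> Dk k < e.
  have cv : cvgn (series Dk).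
    apply: nondecreasing_is_cvgn.
      move=> a b ab; rewrite /series /=.
      by apply: (nondecreasing_series (fun k _ _ => Dk0 k)).
    by exists M => _ [N _ <-]; rewrite /series /=; exact: sumb.
  move=> e e0; have := cvg_series_cvg_0 cv.
  move/cvgrPdist_lt => /(_ e e0) [N _ HN].
  exists N => k kN; have := HN k kN; rewrite sub0r normrN ger0_norm //.
move=> xb acc.
set Gb := Gf xb.
have claim : forall z, g z \is a fin_num ->
    (g xb <= (fine (g z) + dotv Gb (z - xb) + L / 2 * dotv (z - xb) (z - xb))%:E)%E.
  move=> z gzf.
  set r := fine (g z) + dotv Gb (z - xb) + L / 2 * dotv (z - xb) (z - xb).
  suff : [set q : 'rV[R]_n * R | (g q.1 <= q.2%:E)%E] (xb, r) by [].
  apply: gc => B /nbhs_ballP [e e0 eB].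
  set Zv := z - xb.
  set nZ := enorm Zv.
  set Gm := enorm Gb + (L + l).
  set K0 := (L + l) * nZ + Gm + L * nZ + L / 2 + Gm.
  have nZ0 : 0 <= nZ := enorm_ge0 _.
  have Gm0 : 0 <= Gm by rewrite /Gm; have := enorm_ge0 Gb; lra.
  have K00 : 0 <= K0.
    by rewrite /K0; have := mulr_ge0 (ltW Ll0) nZ0; have := mulr_ge0 (ltW L0) nZ0; lra.
  set eta := Num.min 1 (e / (K0 + 1)).
  have eK : 0 < e / (K0 + 1) by rewrite divr_gt0 //; lra.
  have eta0 : 0 < eta by rewrite /eta lt_min ltr01 eK.
  have eta1 : eta <= 1 by rewrite /eta ge_min lexx.
  have etaK : eta * (K0 + 1) <= e.
    have : eta <= e / (K0 + 1) by rewrite /eta ge_min lexx orbT.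
    by rewrite ler_pdivlMr //; lra.
  have etae : eta <= e.
    have : eta * 1 <= eta * (K0 + 1) by rewrite ler_wpM2l ?(ltW eta0) //; lra.
    lra.
  have eta3 : 0 < eta / 3 by rewrite divr_gt0.
  have [N1 HN1] := Dlim _ (exprn_gt0 2 eta3).
  have [k [kN xk]] := acc _ eta3 N1.
  have D1 : enorm (x k - x k.-1) < eta / 3.
    by apply: enorm_lt; [exact: ltW | exact: HN1].
  have D2 : enorm (x k.+1 - x k) < eta / 3.
    by apply: enorm_lt; [exact: ltW | exact: (HN1 k.+1 (leqW kN))].
  have b0 : 0 <= beta k by case/andP: (bk k).
  have b1 : beta k <= 1.
    case/andP: (bk k) => _ h; apply: le_trans h _.
    by rewrite -sqrtr1 ler_sqrt // ler_pdivrMr //; lra.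
  have S := prox_step L0 gm gcv (pxk k) (gfin k.+1) gzf.
  set y := yk k in S *; set p := x k.+1 in S D2 *.
  set a := y - xb; set b := p - y.
  have ea : a = (x k - xb) + beta k *: (x k - x k.-1).
    by rewrite /a /y /yk; apply/rowP => i; rewrite !mxE; ring.
  have eb : b = (p - x k) - beta k *: (x k - x k.-1).
    by rewrite /b /y /yk; apply/rowP => i; rewrite !mxE; ring.
  have d0 := enorm_ge0 (x k - x k.-1).
  have na : enorm a <= 2 * eta / 3.
    rewrite ea; apply: le_trans (enormD _ _) _; rewrite enormZ ger0_norm //.
    nra.
  have nb : enorm b <= 2 * eta / 3.
    rewrite eb; apply: le_trans (enormD _ _) _; rewrite enormN enormZ ger0_norm //.
    nra.
  have npx : enorm (p - xb) < eta.
    have -> : p - xb = (p - x k) + (x k - xb) by apply/rowP => i; rewrite !mxE; ring.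
    apply: le_lt_trans (enormD _ _) _; lra.
  set Gy := Gf y in S *.
  set rk := fine (g z) + dotv Gy (z - y) + L / 2 * dotv (z - y) (z - y) - dotv Gy b - L / 2 * dotv b b.
  have gprk : fine (g p) <= rk.
    have := mulr_ge0 (divr_ge0 (ltW L0) (ler0n _ 2)) (dotvv_ge0 (z - p)).
    rewrite /rk -/b in S *; lra.
  have ezy : z - y = Zv - a by rewrite /Zv /a; apply/rowP => i; rewrite !mxE; ring.
  have E1 : dotv Gy (z - y) - dotv Gb Zv = dotv (Gy - Gb) Zv - dotv Gy a.
    by rewrite ezy [dotv Gy _]dotvBr [dotv (Gy - Gb) _]dotvBl; ring.
  have E2 : dotv (z - y) (z - y) = dotv Zv Zv - 2 * dotv Zv a + dotv a a.
    by rewrite ezy dot_sub_sq.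
  have na0 := enorm_ge0 a.
  have nb0 := enorm_ge0 b.
  have nGyb : enorm (Gy - Gb) <= (L + l) * enorm a.
    have -> : Gy - Gb = (G1 y - G1 xb) - (G2 y - G2 xb).
      by rewrite /Gy /Gb /Gf; apply/rowP => i; rewrite !mxE; ring.
    apply: le_trans (enormD _ _) _; rewrite enormN.
    have := G1L y xb; have := G2L y xb; rewrite -/a; lra.
  have nGy : enorm Gy <= Gm.
    have -> : Gy = Gb + (Gy - Gb) by rewrite addrC subrK.
    apply: le_trans (enormD _ _) _; rewrite /Gm.
    have : enorm a <= 1 by lra.
    have := ltW Ll0; nra.
  have nGy0 := enorm_ge0 Gy.
  have T1 : dotv (Gy - Gb) Zv <= (L + l) * enorm a * nZ.
    apply: le_trans (CS _ _) _; exact: ler_wpM2r.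
  have T2 : - dotv Gy a <= Gm * enorm a.
    have := CS_abs Gy a; rewrite ler_norml => /andP[h _].
    have : enorm Gy * enorm a <= Gm * enorm a by exact: ler_wpM2r.
    lra.
  have T3 : - (L * dotv Zv a) <= L * (nZ * enorm a).
    have := CS_abs Zv a; rewrite ler_norml => /andP[h _].
    rewrite -/nZ in h; rewrite -mulrN; apply: ler_wpM2l; [exact: ltW| lra].
  have T4 : L / 2 * dotv a a <= L / 2 * enorm a.
    rewrite -enorm_sq; apply: ler_wpM2l; first by rewrite divr_ge0 // ltW.
    have : enorm a <= 1 by lra.
    nra.
  have T5 : - dotv Gy b <= Gm * enorm b.
    have := CS_abs Gy b; rewrite ler_norml => /andP[h _].
    have : enorm Gy * enorm b <= Gm * enorm b by exact: ler_wpM2r.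
    lra.
  have T6 : 0 <= L / 2 * dotv b b by rewrite mulr_ge0 ?dotvv_ge0 // divr_ge0 // ltW.
  have Hsum : rk - r <= (L + l) * enorm a * nZ + Gm * enorm a + L * (nZ * enorm a)
        + L / 2 * enorm a + Gm * enorm b.
    rewrite /rk /r -/Zv E2.
    have : dotv Gy (z - y) = dotv Gb Zv + (dotv (Gy - Gb) Zv - dotv Gy a) by rewrite -E1; ring.
    move=> ->; lra.
  have Hk : rk - r <= eta * K0.
    apply: le_trans Hsum _.
    have ea' : enorm a <= eta by lra.
    have eb' : enorm b <= eta by lra.
    have P1 : (L + l) * enorm a * nZ <= (L + l) * eta * nZ.
      by apply: ler_wpM2r => //; apply: ler_wpM2l => //; exact: ltW.
    have P2 : Gm * enorm a <= Gm * eta by exact: ler_wpM2l.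
    have P3 : L * (nZ * enorm a) <= L * (nZ * eta).
      by apply: ler_wpM2l; [exact: ltW | exact: ler_wpM2l].
    have P4 : L / 2 * enorm a <= L / 2 * eta by apply: ler_wpM2l => //; rewrite divr_ge0 // ltW.
    have P5 : Gm * enorm b <= Gm * eta by exact: ler_wpM2l.
    have -> : eta * K0 = (L + l) * eta * nZ + Gm * eta + L * (nZ * eta) + L / 2 * eta + Gm * eta.
      by rewrite /K0; ring.
    lra.
  exists (p, r + eta * K0); split.
    rewrite /= -(fineK (gfin k.+1)) lee_fin -/p; lra.
  apply: eB; split => /=.
    split => // i j; rewrite (ord1 i).
    have := coord_le (xb - p) j; rewrite !mxE => h.
    have : enorm (xb - p) = enorm (p - xb) by rewrite -enormN opprB.
    move=> hh; suff : `|xb 0 j - p 0 j| < e by [].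
    lra.
  suff : `|r - (r + eta * K0)| < e by [].
  rewrite opprD addrA subrr add0r normrN ger0_norm ?mulr_ge0 // ?(ltW eta0) //.
  have : eta * K0 < eta * (K0 + 1) by rewrite ltr_pM2l //; lra.
  lra.
have gxbf : g xb \is a fin_num.
  rewrite fin_numE -ltNye gm /=; apply: contraTneq (claim _ (gfin 0%N)) => ->.
  by rewrite leye_eq.
exists (- Gb); split; last by rewrite /Gb /Gf subrr.
apply: (stat_from_quad (ltW L0) gm gcv gxbf) => z gzf.
by have := claim z gzf; rewrite -(fineK gxbf) lee_fin.
Qed.
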